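(* Consider $\bar{\mathbb R}_+=[0,\infty]$ as a general metric space with distance $(x,y)\mapsto[x,y]$, and for a filter $\mathcal F$ on it put $\liminf(\mathcal F)=\sup_{f\in\mathcal F}\inf f$. Then: (a) a filter $\mathcal F$ on $[0,\infty]$ is weakly flat if and only if either $\liminf(\mathcal F)<\infty$ or $\mathcal F$ is the principal filter $\{f:\infty\in f\}$; (b) every weakly flat filter on $[0,\infty]$ is flat; (c) for weakly flat filters $\mathcal F_1,\mathcal F_2$ on $[0,\infty]$, $\sup_{x}[M^-(\mathcal F_1)(x),M^-(\mathcal F_2)(x)]=[\liminf(\mathcal F_1),\liminf(\mathcal F_2)]$. Consequently the $\mathcal P_1$- and $\mathcal P_2$-completions of $\bar{\mathbb R}_+$ are both isomorphic to $\bar{\mathbb R}_+$.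
   Context: $[x,y]=\max(y-x,0)$ for finite $x,y$, $[x,\infty]=\infty$ for $x<\infty$, $[\infty,y]=0$. A filter on a set is a nonempty set of nonempty subsets closed under finite intersections and supersets. For a general metric space $A$ (here $A(x,y)=[x,y]$), $M^-(\mathcal F)(x)=\sup_{f\in\mathcal F}\inf_{y\in f}A(x,y)$; $\mathcal F$ is weakly flat iff for every $\epsilon>0$ there is $f\in\mathcal F$ such that for all $x\in f$ and $g\in\mathcal F$ there is $y\in g$ with $A(x,y)\le\epsilon$; flat iff the same holds for every finite family $x_1,\dots,x_n\in f$ with a common $y\in g$. The $\mathcal P_1$-completion (resp. $\mathcal P_2$-completion) of $A$ is the general metric space of closed weakly flat (resp. closed flat) filters with distance $\sup_x[M^-(\mathcal F_1)(x),M^-(\mathcal F_2)(x)]$, where a weakly flat $\mathcal F$ is closed iff every $f\in\mathcal F$ contains some $\{x:M^-(\mathcal F)(x)\le\epsilon\}$, $\epsilon>0$. *)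

(* Defs.v *)
From HB Require Import structures.
From mathcomp Require Import all_boot all_order all_algebra.
From mathcomp Require Import all_classical all_reals.
From mathcomp Require Import ereal.
Set Implicit Arguments. Unset Strict Implicit. Unset Printing Implicit Defensive.
Import Order.TTheory GRing.Theory Num.Theory.
Local Open Scope classical_set_scope.
Local Open Scope ereal_scope.

Section Defs.
Variable R : realType.

Definition edist (x y : \bar R) : \bar R :=
  if x == +oo then 0 else if y == +oo then +oo else Order.max (y - x) 0.

Definition ERp := {x : \bar R | 0 <= x}.

Definition ERp_oo : ERp := exist _ +oo (@le0y R).

Definition dERp (x y : ERp) : \bar R := edist (proj1_sig x) (proj1_sig y).

Variable T : Type.

Definition is_filter (F : set (set T)) : Prop :=
  [/\ F !=set0,
      (forall f, F f -> f !=set0),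
      (forall f g, F f -> F g -> F (f `&` g)) &
      (forall f g, F f -> f `<=` g -> F g)].

Definition Mminus (A : T -> T -> \bar R) (F : set (set T)) (x : T) : \bar R :=
  ereal_sup [set ereal_inf [set A x y | y in f] | f in F].

Definition weakly_flat (A : T -> T -> \bar R) (F : set (set T)) : Prop :=
  forall eps : R, (0 < eps)%R ->
    exists2 f, F f &
      forall x, f x -> forall g, F g -> exists2 y, g y & A x y <= eps%:E.

Definition flat (A : T -> T -> \bar R) (F : set (set T)) : Prop :=
  forall eps : R, (0 < eps)%R ->
    exists2 f, F f &
      forall (n : nat) (xs : 'I_n -> T), (forall i, f (xs i)) ->
        forall g, F g -> exists2 y, g y & forall i, A (xs i) y <= eps%:E.

Definition closed_filter (A : T -> T -> \bar R) (F : set (set T)) : Prop :=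
  forall f, F f -> exists2 eps : R, (0 < eps)%R &
    [set x | Mminus A F x <= eps%:E] `<=` f.

Definition filter_dist (A : T -> T -> \bar R) (F1 F2 : set (set T)) : \bar R :=
  ereal_sup [set edist (Mminus A F1 x) (Mminus A F2 x) | x in [set: T]].

Definition P1_point (A : T -> T -> \bar R) (F : set (set T)) : Prop :=
  [/\ is_filter F, weakly_flat A F & closed_filter A F].

Definition P2_point (A : T -> T -> \bar R) (F : set (set T)) : Prop :=
  [/\ is_filter F, flat A F & closed_filter A F].

Definition iso_to_completion (A : T -> T -> \bar R)
    (P : set (set T) -> Prop) : Prop :=
  exists phi : T -> set (set T),
    [/\ (forall x, P (phi x)),
        (forall F, P F -> exists! x, phi x = F) &
        (forall x y, filter_dist A (phi x) (phi y) = A x y)].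

End Defs.

Definition liminfF (R : realType) (F : set (set (ERp R))) : \bar R :=
  ereal_sup [set ereal_inf [set proj1_sig x | x in f] | f in F].

(* Main.v *)
Require Import Defs.
From HB Require Import structures.
From mathcomp Require Import all_boot all_order all_algebra.
From mathcomp Require Import all_classical all_reals.
From mathcomp Require Import ereal.
From mathcomp Require Import lra.
Import Order.TTheory GRing.Theory Num.Theory.
Local Open Scope classical_set_scope.
Local Open Scope ereal_scope.

Section S.
Variable R : realType.
Implicit Types (r : R) (t u : \bar R).

Lemma edist_fin r t : edist r%:E t = maxe (t - r%:E) 0.
Proof.
rewrite /edist /=; case: (eqVneq t +oo) => [->|//].
by rewrite /Order.max /=.
Qed.

Lemma edist_oo t : edist +oo t = 0.
Proof. by rewrite /edist eqxx. Qed.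

Lemma edist_finoo r : edist r%:E +oo = +oo.
Proof. by rewrite /edist. Qed.

Lemma edist_00 : edist (0 : \bar R) 0 = 0.
Proof. by rewrite (edist_fin 0) subee // maxxx. Qed.

Lemma edist0 t : 0 <= t -> edist (0 : \bar R) t = t.
Proof.
case: t => [s| |] t0 //.
by rewrite (edist_fin 0) sube0 max_l.
Qed.

Lemma edist_ge0 t u : 0 <= edist t u.
Proof.
rewrite /edist; case: ifP => // _; case: ifP => // _.
by rewrite le_max lexx orbT.
Qed.

Lemma edist_inf t (S : set \bar R) : 0 <= t -> S !=set0 ->
  ereal_inf [set edist t u | u in S] = edist t (ereal_inf S).
Proof.
move=> t0 [u0 Su0].
case: t t0 => [r| |] t0.
- apply/eqP; rewrite eq_le; apply/andP; split.
  + set I := ereal_inf _.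
    rewrite edist_fin.
    have [I0|I0] := leP I 0; first by rewrite le_max I0 orbT.
    suff H : I + r%:E <= ereal_inf S.
      by rewrite le_max; apply/orP; left; rewrite leeBrDr.
    apply: le_ereal_inf_tmp => v Sv.
    have : I <= edist r%:E v by apply: ereal_inf_lbound; exists v.
    rewrite edist_fin le_max => /orP[|]; first by rewrite leeBrDr.
    by move=> h; move: (lt_le_trans I0 h); rewrite ltxx.
  + apply: le_ereal_inf_tmp => _ [v Sv <-].
    rewrite !edist_fin.
    rewrite ge_max !le_max lexx !orbT andbT leeD2r //.
    by apply: ereal_inf_lbound.
- rewrite edist_oo.
  have -> : [set edist +oo u | u in S] = [set 0].
    apply/seteqP; split => [x [v _ <-]|x ->]; first by rewrite edist_oo.
    by exists u0 => //; rewrite edist_oo.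
  by rewrite ereal_inf1.
- by [].
Qed.

Lemma edist_sup t (S : set \bar R) : 0 <= t -> S !=set0 ->
  ereal_sup [set edist t u | u in S] = edist t (ereal_sup S).
Proof.
move=> t0 [u0 Su0].
case: t t0 => [r| |] t0.
- apply/eqP; rewrite eq_le; apply/andP; split.
  + apply: ge_ereal_sup => _ [v Sv <-].
    rewrite !edist_fin ge_max !le_max lexx !orbT andbT leeD2r //.
    by apply: ereal_sup_ubound.
  + set U := ereal_sup [set edist r%:E u | u in S].
    have HU : forall v, S v -> edist r%:E v <= U.
      by move=> v Sv; apply: ereal_sup_ubound; exists v.
    rewrite edist_fin ge_max; apply/andP; split.
      rewrite leeBlDr //; apply: ge_ereal_sup => v Sv; rewrite -leeBlDr //.
      by apply: le_trans (HU v Sv); rewrite edist_fin le_max lexx.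
    exact: le_trans (edist_ge0 _ _) (HU u0 Su0).
- rewrite edist_oo.
  have -> : [set edist +oo u | u in S] = [set 0].
    apply/seteqP; split => [x [v _ <-]|x ->]; first by rewrite edist_oo.
    by exists u0 => //; rewrite edist_oo.
  by rewrite ereal_sup1.
- by [].
Qed.

Implicit Types (x y z : ERp R) (F : set (set (ERp R))).

Lemma val_ge0 x : 0 <= proj1_sig x.
Proof. exact: proj2_sig x. Qed.

Lemma ERp_inj x y : proj1_sig x = proj1_sig y -> x = y.
Proof.
case: x => a ha; case: y => b hb /= eab; subst b.
by congr exist; apply: eq_irrelevance.
Qed.

Lemma image_val_ne0 (f : set (ERp R)) : f !=set0 -> [set proj1_sig z | z in f] !=set0.
Proof. by move=> [z fz]; exists (proj1_sig z); exists z. Qed.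

Lemma Mminus_eq F y : is_filter F ->
  Mminus (@dERp R) F y = edist (proj1_sig y) (liminfF F).
Proof.
move=> [[f0 Ff0] Fne FI FU].
rewrite /Mminus /liminfF -edist_sup ?val_ge0 //; last first.
  by exists (ereal_inf [set proj1_sig z | z in f0]); exists f0.
have inner f : F f -> ereal_inf [set dERp y z | z in f] =
    edist (proj1_sig y) (ereal_inf [set proj1_sig z | z in f]).
  move=> Ff; rewrite -edist_inf ?val_ge0 //; last exact: image_val_ne0 (Fne _ Ff).
  congr ereal_inf; apply/seteqP; split => [_ [z fz <-]|_ [_ [z fz <-] <-]].
  + by exists (proj1_sig z) => //; exists z.
  + by exists z.
congr ereal_sup; apply/seteqP; split => _ [f Ff <-].
- exists (ereal_inf [set proj1_sig z | z in f]); first by exists f.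
  by rewrite inner.
- move: Ff => [g Fg <-].
  by exists g => //; rewrite inner.
Qed.

Lemma liminf_ge0 F : is_filter F -> 0 <= liminfF F.
Proof.
move=> [[f0 Ff0] Fne FI FU].
apply: (@le_trans _ _ (ereal_inf [set proj1_sig z | z in f0])).
  by apply: le_ereal_inf_tmp => _ [z _ <-]; apply: val_ge0.
by apply: ereal_sup_ubound; exists f0.
Qed.


Lemma real_ineq (r s u : R) :
  (Num.max (Num.max (u - r) 0 - Num.max (s - r) 0) 0 <= Num.max (u - s) 0)%R.
Proof.
have [h3|h3] := leP (u - s)%R 0%R;
have [h1|h1] := leP (u - r)%R 0%R;
have [h2|h2] := leP (s - r)%R 0%R;
rewrite ?(max_r h3) ?(max_l (ltW h3)) ?(max_r h1) ?(max_l (ltW h1)) ?(max_r h2) ?(max_l (ltW h2));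
rewrite ge_max; apply/andP; split; lra.
Qed.

Lemma edist_pt x a b : 0 <= a -> 0 <= b ->
  edist (edist (proj1_sig x) a) (edist (proj1_sig x) b) <= edist a b.
Proof.
case: x => [[r| |] hx] /= a0 b0; last by [].
- case: a a0 => [s| |] a0; last by [].
  + case: b b0 => [u| |] b0; last by [].
    * rewrite !(edist_fin r) -!EFinB -!EFin_max edist_fin -EFinB -!EFin_max.
      by rewrite edist_fin -EFinB -EFin_max lee_fin real_ineq.
    * by rewrite !edist_finoo leey.
  + by rewrite edist_finoo edist_oo edist_ge0.
- by rewrite !edist_oo edist_00 edist_ge0.
Qed.

Lemma ERp0_ge0 : (0 : \bar R) <= 0. Proof. exact: lexx. Qed.
Definition ERp0 : ERp R := exist _ 0 ERp0_ge0.

Lemma sup_edist2 a b : 0 <= a -> 0 <= b ->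
  ereal_sup [set edist (edist (proj1_sig x) a) (edist (proj1_sig x) b) | x in [set: ERp R]]
  = edist a b.
Proof.
move=> a0 b0; apply/eqP; rewrite eq_le; apply/andP; split.
  by apply: ge_ereal_sup => _ [x _ <-]; apply: edist_pt.
apply: ereal_sup_ubound; exists ERp0 => //=.
by rewrite !edist0.
Qed.

Lemma part_c F1 F2 : is_filter F1 -> is_filter F2 ->
  filter_dist (@dERp R) F1 F2 = edist (liminfF F1) (liminfF F2).
Proof.
move=> h1 h2; rewrite /filter_dist -sup_edist2 ?liminf_ge0 //.
congr ereal_sup; apply/seteqP; split => _ [x _ <-]; exists x => //.
  by rewrite !Mminus_eq.
by rewrite !Mminus_eq.
Qed.

Definition cond F := liminfF F < +oo \/ F = [set f | f (ERp_oo R)].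

Lemma edist_leP t u (e : R) : 0 <= t -> (0 < e)%R ->
  (edist t u <= e%:E) = (u <= t + e%:E).
Proof.
move=> t0 e0; case: t t0 => [r| |] t0 //.
- rewrite edist_fin ge_max lee_fin (ltW e0) andbT leeBlDr // addeC //.
- by rewrite edist_oo lee_fin (ltW e0) /= leey.
Qed.

Lemma cond_flat F : is_filter F -> cond F -> flat (@dERp R) F.
Proof.
move=> hF [Lfin|->] e e0.
- have L0 := liminf_ge0 _ hF.
  move: Lfin L0; case E : (liminfF F) => [l| |] // _ _.
  have : (l - e)%:E < liminfF F by rewrite E lte_fin; lra.
  move/ereal_sup_gt => [_ [f Ff <-] hf].
  exists f => // n xs hxs g Fg.
  have hg : ereal_inf [set proj1_sig z | z in g] <= l%:E.
    by rewrite -E; apply: ereal_sup_ubound; exists g.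
  have : ereal_inf [set proj1_sig z | z in g] <
         ereal_inf [set proj1_sig z | z in f] + e%:E.
    by apply: le_lt_trans hg _; rewrite -lteBlDr // -EFinB.
  move/ereal_inf_lt => [_ [y gy <-] hy].
  exists y => // i.
  have hfi : ereal_inf [set proj1_sig z | z in f] <= proj1_sig (xs i).
    by apply: ereal_inf_lbound; exists (xs i).
  rewrite /dERp edist_leP ?val_ge0 //.
  by apply: ltW; apply: lt_le_trans hy _; rewrite leeD2r.
- exists [set ERp_oo R] => //= n xs hxs g Fg.
  exists (ERp_oo R) => // i.
  by rewrite (hxs i) /dERp edist_oo lee_fin ltW.
Qed.

Lemma flat_wf F : flat (@dERp R) F -> weakly_flat (@dERp R) F.
Proof.
move=> fl e e0; have [f Ff H] := fl e e0; exists f => // x fx g Fg.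
have [y gy Hy] := H 1%N (fun _ => x) (fun _ => fx) g Fg.
by exists y => //; apply: (Hy ord0).
Qed.

Lemma wf_cond F : is_filter F -> weakly_flat (@dERp R) F -> cond F.
Proof.
move=> [[f0 Ff0] Fne FI FU] wf.
case: (ltP (liminfF F) +oo) => [lt|ge]; [by left|right].
have [f Ff H] := wf 1%R ltr01.
have fo : forall x, f x -> x = ERp_oo R.
  move=> x fx; apply: ERp_inj; case: x fx => [[r| |] hr] fx //=.
  exfalso.
  have : (r + 1)%:E < liminfF F := lt_le_trans (ltry _) ge.
  move/ereal_sup_gt => [_ [g Fg <-] hg].
  have [y gy hy] := H _ fx g Fg.
  have hgy : ereal_inf [set proj1_sig z | z in g] <= proj1_sig y.
    by apply: ereal_inf_lbound; exists y.
  move: hy; rewrite /dERp /= edist_leP ?ltr01 //.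
  move=> hy; have := lt_le_trans hg (le_trans hgy hy).
  by rewrite -EFinD ltxx.
apply/funext => g; apply/propext; split.
- move=> Fg; have [z [fz gz]] := Fne _ (FI _ _ Ff Fg).
  by rewrite /= -(fo z fz).
- move=> /= g0; apply: FU Ff _ => z fz.
  by rewrite (fo z fz).
Qed.

Definition phi (x : ERp R) : set (set (ERp R)) :=
  [set f | exists2 e : R, (0 < e)%R &
     forall y, proj1_sig x <= proj1_sig y + e%:E -> f y].

Lemma phi_mem_oo x f : phi x f -> f (ERp_oo R).
Proof. by move=> [e e0 H]; apply: H; rewrite /= leey. Qed.

Lemma phi_filter x : is_filter (phi x).
Proof.
split.
- by exists setT; exists 1%R.
- by move=> f /phi_mem_oo fo; exists (ERp_oo R).
- move=> f g [e1 e1p H1] [e2 e2p H2]; exists (Num.min e1 e2).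
    by rewrite lt_min e1p e2p.
  move=> y hy; split; [apply: H1|apply: H2]; apply: le_trans hy _;
    by rewrite leeD2l // lee_fin ge_min lexx ?orbT.
- by move=> f g [e ep H] fg; exists e => // y hy; apply: fg; apply: H.
Qed.

Lemma phi_liminf x : liminfF (phi x) = proj1_sig x.
Proof.
apply/eqP; rewrite eq_le; apply/andP; split.
- apply: ge_ereal_sup => _ [f [e ep H] <-].
  apply: ereal_inf_lbound; exists x => //; apply: H.
  by apply: leeDl; rewrite lee_fin ltW.
- apply/lee_addgt0Pr => e ep.
  rewrite -leeBlDr //.
  apply: (@le_trans _ _ (ereal_inf [set proj1_sig z |
     z in [set y | proj1_sig x <= proj1_sig y + e%:E]])).
    by apply: le_ereal_inf_tmp => _ [y fy <-]; rewrite leeBlDr.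
  apply: ereal_sup_ubound; exists [set y | proj1_sig x <= proj1_sig y + e%:E] => //.
  by exists e.
Qed.

Lemma phi_closed x : closed_filter (@dERp R) (phi x).
Proof.
have key y : Mminus (@dERp R) (phi x) y = edist (proj1_sig y) (proj1_sig x).
  rewrite Mminus_eq; [by rewrite phi_liminf | exact: phi_filter].
move=> f [e ep H]; exists e => // y /=.
rewrite key edist_leP ?val_ge0 //.
exact: H.
Qed.

Lemma phi_oo : phi (ERp_oo R) = [set f | f (ERp_oo R)].
Proof.
apply/funext => f; apply/propext; split; first exact: phi_mem_oo.
move=> /= fo; exists 1%R => // y hy.
have -> : y = ERp_oo R; last by [].
apply: ERp_inj; case: y hy => [[r| |] hr] hy //=.
Qed.

Lemma phi_cond x : cond (phi x).
Proof.
case: x => [[r| |] hr].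
- by left; rewrite phi_liminf ltry.
- right; rewrite -phi_oo; congr phi; exact: ERp_inj.
- by [].
Qed.

Lemma phi_flat x : flat (@dERp R) (phi x).
Proof. exact: cond_flat (phi_filter x) (phi_cond x). Qed.

Lemma phi_onto F : is_filter F -> weakly_flat (@dERp R) F ->
  closed_filter (@dERp R) F -> exists! x, phi x = F.
Proof.
move=> hF wf cl.
suff [x hx] : exists x, phi x = F.
  exists x; split => // x' hx'; apply: ERp_inj.
  by rewrite -(phi_liminf x) -(phi_liminf x') hx hx'.
have L0 := liminf_ge0 _ hF.
case: (wf_cond _ hF wf) => [Lfin|->]; last by exists (ERp_oo R); exact: phi_oo.
have [l El] : exists l : R, liminfF F = l%:E.
  by move: Lfin L0; case: (liminfF F) => [l| |] // _ _; exists l.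
exists (exist _ (liminfF F) L0).
move: hF => [[f0 Ff0] Fne FI FU].
apply/funext => f; apply/propext; split.
- move=> [e ep H].
  have : liminfF F - e%:E < liminfF F.
    by rewrite El -EFinB lte_fin; lra.
  move/ereal_sup_gt => [_ [g Fg <-] hg].
  apply: FU Fg _ => z gz; apply: H => /=.
  rewrite -leeBlDr //.
  apply: (ltW (lt_le_trans hg _)).
  by apply: ereal_inf_lbound; exists z.
- move=> Ff; have [e ep H] := cl f Ff; exists e => // y hy; apply: H => /=.
  rewrite Mminus_eq; last by split => //; exists f0.
  by rewrite (edist_leP _ _ _ (val_ge0 y) ep).
Qed.

End S.

Theorem mainTheorem19 (R : realType) :
  (* (a) *)
  (forall F : set (set (ERp R)), is_filter F ->
     (weakly_flat (@dERp R) F <->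
        (liminfF F < +oo \/ F = [set f | f (ERp_oo R)]))) /\
  (* (b) *)
  (forall F : set (set (ERp R)), is_filter F ->
     weakly_flat (@dERp R) F -> flat (@dERp R) F) /\
  (* (c) *)
  (forall F1 F2 : set (set (ERp R)), is_filter F1 -> is_filter F2 ->
     weakly_flat (@dERp R) F1 -> weakly_flat (@dERp R) F2 ->
     filter_dist (@dERp R) F1 F2 = edist (liminfF F1) (liminfF F2)) /\
  (* consequence: P1- and P2-completions are isomorphic to [0,oo] *)
  iso_to_completion (@dERp R) (P1_point (@dERp R)) /\
  iso_to_completion (@dERp R) (P2_point (@dERp R)).

Proof.
have iso : forall P : set (set (ERp R)) -> Prop, (forall x, P (@phi R x)) ->
   (forall F, P F -> [/\ is_filter F, weakly_flat (@dERp R) F & closed_filter (@dERp R) F]) ->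
   iso_to_completion (@dERp R) P.
  move=> P hP hP'; exists (@phi R); split => //.
  - by move=> F /hP' [hF wf cl]; apply: phi_onto.
  - move=> x y; rewrite part_c; try apply: phi_filter.
    by rewrite !phi_liminf.
split; [|split; [|split; [|split]]].
- move=> F hF; split; first exact: wf_cond.
  by move=> c; apply: flat_wf; apply: cond_flat.
- by move=> F hF wf; apply: cond_flat => //; apply: wf_cond.
- by move=> F1 F2 h1 h2 _ _; apply: part_c.
- apply: iso => [x|F [hF wf cl]]; last by split.
  by split; [apply: phi_filter|apply: flat_wf; apply: phi_flat|apply: phi_closed].
- apply: iso => [x|F [hF fl cl]]; last by split => //; apply: flat_wf.
  by split; [apply: phi_filter|apply: phi_flat|apply: phi_closed].
Qed.
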